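(* Let $K=\mathbb{Q}(\sqrt2)$ and $\delta\in K^*$. Let $q_1(t)=t^2-(4+2\sqrt2)t-3-2\sqrt2$ and $p(t)=t^4-12t^3+2t^2+12t+1$, let $H_\delta$ be the genus $2$ curve $\delta W^2=q_1(t)p(t)$ and $E_\delta$ the elliptic curve $\delta y^2=x^3+5\sqrt2x^2-x$. Then $\varphi(t,W)=\left(\frac{-2(-3+2\sqrt2)\,q_1(t)}{(t-\sqrt2+1)^2},\ \frac{3(-4+3\sqrt2)\,W}{(t-\sqrt2+1)^3}\right)$ defines a non-constant morphism $\varphi:H_\delta\to E_\delta$. *)

(* Defs.v *)
(* K = Q(sqrt 2) is realised inside algC (algebraic closure of Q),
   which also serves as an algebraic closure of K for geometric points. *)
From mathcomp Require Import all_boot all_order all_algebra all_field.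
Set Implicit Arguments. Unset Strict Implicit. Unset Printing Implicit Defensive.
Import Order.TTheory GRing.Theory Num.Theory.
Local Open Scope ring_scope.

Definition s2 : algC := sqrtC 2.

Definition inK (x : algC) : Prop := exists a b : rat, x = ratr a + ratr b * s2.

Definition q1 (t : algC) : algC := t ^+ 2 - (4 + 2 * s2) * t - 3 - 2 * s2.
Definition pp (t : algC) : algC := t ^+ 4 - 12 * t ^+ 3 + 2 * t ^+ 2 + 12 * t + 1.

Definition onH (delta t W : algC) : Prop := delta * W ^+ 2 = q1 t * pp t.
Definition onE (delta x y : algC) : Prop := delta * y ^+ 2 = x ^+ 3 + 5 * s2 * x ^+ 2 - x.

Definition phiX (t : algC) : algC :=
  (- 2 * (- 3 + 2 * s2) * q1 t) / (t - s2 + 1) ^+ 2.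
Definition phiY (t W : algC) : algC :=
  (3 * (- 4 + 3 * s2) * W) / (t - s2 + 1) ^+ 3.

(* Main.v *)
Require Import Defs.
From mathcomp Require Import all_boot all_order all_algebra all_field.
From mathcomp Require Import ring.
Import GRing.Theory.
Local Open Scope ring_scope.
Import Order.TTheory Num.Theory.
Lemma key_id (R : comRingType) (s t : R) :
  (3 * (- 4 + 3 * s)) ^+ 2 * (t ^+ 2 - (4 + 2 * s) * t - 3 - 2 * s) * (t ^+ 4 - 12 * t ^+ 3 + 2 * t ^+ 2 + 12 * t + 1) - ((- 2 * (- 3 + 2 * s)) ^+ 3 * (t ^+ 2 - (4 + 2 * s) * t - 3 - 2 * s) ^+ 3 + 5 * s * (- 2 * (- 3 + 2 * s)) ^+ 2 * (t ^+ 2 - (4 + 2 * s) * t - 3 - 2 * s) ^+ 2 * (t - s + 1) ^+ 2 - (- 2 * (- 3 + 2 * s)) * (t ^+ 2 - (4 + 2 * s) * t - 3 - 2 * s) * (t - s + 1) ^+ 4)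
  = (s ^+ 2 - 2) * ((-2691%:R) * s ^+ 0 * t ^+ 0 + (-8736%:R) * s ^+ 0 * t ^+ 1 + (-8721%:R) * s ^+ 0 * t ^+ 2 + (-1920%:R) * s ^+ 0 * t ^+ 3 + 867%:R * s ^+ 0 * t ^+ 4 + (-144%:R) * s ^+ 0 * t ^+ 5 + 33%:R * s ^+ 0 * t ^+ 6 + 594%:R * s ^+ 1 * t ^+ 0 + 3118%:R * s ^+ 1 * t ^+ 1 + 5316%:R * s ^+ 1 * t ^+ 2 + 2948%:R * s ^+ 1 * t ^+ 3 + (-854%:R) * s ^+ 1 * t ^+ 4 + (-162%:R) * s ^+ 1 * t ^+ 5 + (-16%:R) * s ^+ 1 * t ^+ 6 + 878%:R * s ^+ 2 * t ^+ 0 + 2568%:R * s ^+ 2 * t ^+ 1 + 2214%:R * s ^+ 2 * t ^+ 2 + 368%:R * s ^+ 2 * t ^+ 3 + 912%:R * s ^+ 2 * t ^+ 4 + 96%:R * s ^+ 2 * t ^+ 5 + 448%:R * s ^+ 3 * t ^+ 0 + 612%:R * s ^+ 3 * t ^+ 1 + (-1364%:R) * s ^+ 3 * t ^+ 2 + (-1472%:R) * s ^+ 3 * t ^+ 3 + (-272%:R) * s ^+ 3 * t ^+ 4 + 136%:R * s ^+ 4 * t ^+ 0 + 72%:R * s ^+ 4 * t ^+ 1 + 384%:R * s ^+ 4 * t ^+ 2 + 448%:R * s ^+ 4 * t ^+ 3 + (-320%:R) * s ^+ 5 * t ^+ 0 + (-640%:R) * s ^+ 5 * t ^+ 1 + (-320%:R)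 * s ^+ 5 * t ^+ 2).
Proof. ring. Qed.

Lemma part1g (F : fieldType) (s delta t W : F) : s ^+ 2 = 2 ->
  delta * W ^+ 2 = (t ^+ 2 - (4 + 2 * s) * t - 3 - 2 * s) * (t ^+ 4 - 12 * t ^+ 3 + 2 * t ^+ 2 + 12 * t + 1) ->
  t - s + 1 != 0 ->
  delta * ((3 * (- 4 + 3 * s) * W) / (t - s + 1) ^+ 3) ^+ 2 =
  ((- 2 * (- 3 + 2 * s) * (t ^+ 2 - (4 + 2 * s) * t - 3 - 2 * s)) / (t - s + 1) ^+ 2) ^+ 3
  + 5 * s * ((- 2 * (- 3 + 2 * s) * (t ^+ 2 - (4 + 2 * s) * t - 3 - 2 * s)) / (t - s + 1) ^+ 2) ^+ 2
  - ((- 2 * (- 3 + 2 * s) * (t ^+ 2 - (4 + 2 * s) * t - 3 - 2 * s)) / (t - s + 1) ^+ 2).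
Proof.
move=> hs H hd.
have K := @key_id F s t; rewrite hs subrr mul0r in K.
move/eqP: K; rewrite subr_eq0 => /eqP K.
set q := (t ^+ 2 - _) in H K *; set p := (t ^+ 4 - _) in H K *.
set d := t - s + 1 in hd K *.
have -> : delta * (3 * (-4 + 3 * s) * W / d ^+ 3) ^+ 2
   = (3 * (-4 + 3 * s)) ^+ 2 * (delta * W ^+ 2) / d ^+ 6 by field.
rewrite H mulrA K. by field.
Qed.

Lemma nat_neq (F : numFieldType) (m n : nat) : (m%:R : F) = n%:R -> m = n.
Proof. by move/eqP; rewrite eqr_nat => /eqP. Qed.

Lemma neqs (F : numFieldType) (s : F) : s ^+ 2 = 2 ->
  [/\ s - 1 != 0, -4 + 3 * s != 0 & -3 - 2 * s != 0].
Proof.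
move=> hs; split; apply/eqP => h.
- have e : s = 1 by apply/eqP; rewrite -subr_eq0 h.
  rewrite e expr1n in hs.
  by have := @nat_neq F 1 2 hs.
- have e : 3 * s = 4 by apply/eqP; rewrite -subr_eq0 addrC h.
  have : (18%:R : F) = 16%:R.
    have -> : (18%:R : F) = 9 * s ^+ 2 by rewrite hs; ring.
    have -> : (9 : F) * s ^+ 2 = (3 * s) ^+ 2 by ring.
    by rewrite e; ring.
  by move/nat_neq.
- have e : 2 * s = -3 by apply/eqP; rewrite -subr_eq0 -oppr_eq0 -h; apply/eqP; ring.
  have : (8%:R : F) = 9%:R.
    have -> : (8%:R : F) = 4 * s ^+ 2 by rewrite hs; ring.
    have -> : (4 : F) * s ^+ 2 = (2 * s) ^+ 2 by ring.
    by rewrite e; ring.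
  by move/nat_neq.
Qed.

Lemma s2sq : s2 ^+ 2 = 2.
Proof. by rewrite /s2 sqrtCK. Qed.

Theorem lemma7p3 (delta : algC) (hK : inK delta) (hd : delta != 0) :
  (forall t W : algC, onH delta t W -> t != s2 - 1 ->
     onE delta (phiX t) (phiY t W)) /\
  (exists t1 W1 t2 W2 : algC,
     [/\ onH delta t1 W1, onH delta t2 W2, t1 != s2 - 1, t2 != s2 - 1 &
         (phiX t1, phiY t1 W1) <> (phiX t2, phiY t2 W2)]).
Proof.
have [n1 n2 n3] := @neqs _ s2 s2sq.
split.
  move=> t W H ht; apply: part1g => //; first exact: s2sq.
  apply: contra ht => /eqP h; apply/eqP.
  by rewrite -[t]subr0 -h; ring.
set W := sqrtC (q1 0 * pp 0 / delta).
have hW : delta * W ^+ 2 = q1 0 * pp 0 by rewrite /W sqrtCK; field.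
have hq : q1 0 * pp 0 = -3 - 2 * s2 by rewrite /q1 /pp; ring.
have W0 : W != 0.
  apply/eqP => w0; move: hW; rewrite w0 hq expr0n /= mulr0; move/esym/eqP.
  by rewrite (negPf n3).
have hd0 : (0 : algC) != s2 - 1.
  by rewrite eq_sym n1.
exists 0, W, 0, (- W); split => //.
- by rewrite /onH sqrrN hW.
- move=> /(congr1 snd) /= e.
  have hy : phiY 0 (-W) = - phiY 0 W by rewrite /phiY mulrN mulNr.
  rewrite hy in e; move/eqP: e; rewrite -addr_eq0 -mulr2n mulrn_eq0 /=.
  rewrite /phiY !mulf_eq0 invr_eq0 expf_eq0 /= (negPf W0) (negPf n2) orbF.
  have -> : 0 - s2 + 1 = - (s2 - 1) by ring.
  by rewrite oppr_eq0 (negPf n1) pnatr_eq0.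
Qed.
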